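(* Let $d\ge3$, $\alpha\in(0,1/2)$, $z\in(0,1)$, and for $\beta>0$ set $y=y(\beta)=-\beta^{-1}\log z$. Let $r_1,r_2$ be independent with distribution $\alpha\delta_{-1}+(1-2\alpha)\delta_0+\alpha\delta_1$, let $\rho_i(\sigma)=\frac{1+\sigma r_i}{2}$ for $\sigma=\pm1$, and $X_2=1-(1-e^{-\beta})\sum_{\tau\in\{\pm1\}}\rho_1(\tau)\rho_2(\tau)$. Then \[\lim_{\beta\to\infty}\log\mathbb{E}[X_2^y]=\log(1-2\alpha^2+2\alpha^2z).\]
   Context: $\delta_x$ denotes the point mass at $x$. *)

(* Defs.v *)
From Stdlib Require Import Reals Lra List.
From Coquelicot Require Import Coquelicot.
Import ListNotations.
Open Scope R_scope.

(* The law alpha*delta_{-1} + (1-2 alpha)*delta_0 + alpha*delta_1,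
   as a list of (atom, mass) pairs. *)
Definition rlaw (alpha : R) : list (R * R) :=
  [(-1, alpha); (0, 1 - 2 * alpha); (1, alpha)].

Definition rho (r sigma : R) : R := (1 + sigma * r) / 2.

Definition X2 (beta r1 r2 : R) : R :=
  1 - (1 - exp (- beta)) * (rho r1 1 * rho r2 1 + rho r1 (-1) * rho r2 (-1)).

Definition yexp (z beta : R) : R := - (/ beta) * ln z.

(* E[ X_2^y ] for r1, r2 independent with law rlaw alpha:
   the sum over the product law of the two (finite) marginals. *)
Definition EX2y (alpha z beta : R) : R :=
  fold_right Rplus 0
    (map (fun p1 : R * R =>
       fold_right Rplus 0
         (map (fun p2 : R * R =>
            snd p1 * snd p2 * Rpower (X2 beta (fst p1) (fst p2)) (yexp z beta))
          (rlaw alpha)))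
     (rlaw alpha)).

(* Main.v *)
Require Import Defs.
From Stdlib Require Import Reals.
From Coquelicot Require Import Coquelicot.
From Stdlib Require Import Lra.
Open Scope R_scope.

Lemma X2_form b r1 r2 : X2 b r1 r2 = 1 - (1 - exp(-b))*(1+r1*r2)/2.
Proof. unfold X2, rho; field. Qed.

Lemma Rp1 y : Rpower 1 y = 1.
Proof. unfold Rpower; rewrite ln_1, Rmult_0_r; apply exp_0. Qed.

Lemma Rpe z b : 0 < z -> 0 < b -> Rpower (exp (-b)) (yexp z b) = z.
Proof.
  intros Hz Hb. unfold Rpower, yexp. rewrite ln_exp.
  replace (- / b * ln z * - b) with (ln z) by (field; lra). apply exp_ln; lra.
Qed.

Lemma EX_form alpha z b : 0 < z -> 0 < b ->
  EX2y alpha z b = 2*alpha^2*z + 2*alpha^2 +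
   (1 - 4*alpha^2) * Rpower ((1 + exp(-b))/2) (yexp z b).
Proof.
  intros Hz Hb. unfold EX2y, rlaw. cbn [List.map List.fold_right fst snd].
  rewrite !X2_form.
  replace (1 - (1 - exp (- b)) * (1 + -1 * -1) / 2) with (exp (-b)) by field.
  replace (1 - (1 - exp (- b)) * (1 + 1 * 1) / 2) with (exp (-b)) by field.
  replace (1 - (1 - exp (- b)) * (1 + -1 * 1) / 2) with 1 by field.
  replace (1 - (1 - exp (- b)) * (1 + 1 * -1) / 2) with 1 by field.
  replace (1 - (1 - exp (- b)) * (1 + -1 * 0) / 2) with ((1 + exp(-b))/2) by field.
  replace (1 - (1 - exp (- b)) * (1 + 0 * -1) / 2) with ((1 + exp(-b))/2) by field.
  replace (1 - (1 - exp (- b)) * (1 + 0 * 0) / 2) with ((1 + exp(-b))/2) by field.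
  replace (1 - (1 - exp (- b)) * (1 + 0 * 1) / 2) with ((1 + exp(-b))/2) by field.
  replace (1 - (1 - exp (- b)) * (1 + 1 * 0) / 2) with ((1 + exp(-b))/2) by field.
  rewrite !Rp1, !(Rpe z b Hz Hb). ring.
Qed.

Theorem lemma6p1 (d : nat) (alpha z : R) :
  (3 <= d)%nat -> 0 < alpha < 1 / 2 -> 0 < z < 1 ->
  is_lim (fun beta => ln (EX2y alpha z beta)) p_infty
    (ln (1 - 2 * alpha ^ 2 + 2 * alpha ^ 2 * z)).
Proof.
  intros _ Ha Hz.
  assert (He : is_lim (fun b => exp (-b)) p_infty 0).
  { apply (is_lim_comp exp (fun b => -b) p_infty 0 m_infty).
    - apply is_lim_exp_m.
    - apply (is_lim_opp (fun b => b) p_infty p_infty). apply is_lim_id.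
    - exists 0. intros y _. discriminate. }
  assert (Hl : is_lim (fun b => ln ((1 + exp (-b))/2)) p_infty (ln ((1+0)/2))).
  { apply (is_lim_comp_continuous (fun b => (1 + exp (-b))/2) ln p_infty ((1+0)/2)).
    - apply (is_lim_div _ _ p_infty (1+0) 2).
      + apply (is_lim_plus _ _ p_infty 1 0). apply is_lim_const. exact He.
        simpl. reflexivity.
      + apply is_lim_const.
      + simpl. intro H; injection H; lra.
      + simpl. reflexivity.
    - apply continuous_ln. lra. }
  assert (Hy : is_lim (fun b => yexp z b) p_infty 0).
  { unfold yexp.
    apply (is_lim_ext (fun b => (- ln z) * / b)). { intro; ring. }
    replace (Finite 0) with (Rbar_mult (- ln z) 0) by (simpl; f_equal; ring).
    apply is_lim_mult. apply is_lim_const.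
    replace (Finite 0) with (Rbar_inv p_infty) by reflexivity.
    apply is_lim_inv. apply is_lim_id. discriminate. simpl. exact I. }
  assert (Hp : is_lim (fun b => yexp z b * ln ((1 + exp (-b))/2)) p_infty 0).
  { replace (Finite 0) with (Rbar_mult 0 (ln ((1+0)/2))) by (simpl; f_equal; ring).
    apply is_lim_mult; auto. simpl. exact I. }
  assert (Hg : is_lim (fun b => Rpower ((1 + exp(-b))/2) (yexp z b)) p_infty 1).
  { unfold Rpower. replace (Finite 1) with (Finite (exp 0)) by (rewrite exp_0; reflexivity).
    apply (is_lim_comp_continuous _ exp p_infty 0); auto. apply continuous_exp. }
  assert (HL : 0 < 1 - 2 * alpha ^ 2 + 2 * alpha ^ 2 * z) by nra.
  apply (is_lim_ext_loc (fun b => ln (2*alpha^2*z + 2*alpha^2 +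
   (1 - 4*alpha^2) * Rpower ((1 + exp(-b))/2) (yexp z b)))).
  { exists 0. intros b Hb. rewrite EX_form; auto; lra. }
  apply (is_lim_comp_continuous (fun b => 2*alpha^2*z + 2*alpha^2 +
   (1 - 4*alpha^2) * Rpower ((1 + exp(-b))/2) (yexp z b)) ln p_infty).
  - replace (1 - 2 * alpha ^ 2 + 2 * alpha ^ 2 * z) with
      (2*alpha^2*z + 2*alpha^2 + (1 - 4*alpha^2) * 1) by ring.
    apply (is_lim_plus _ _ p_infty (2*alpha^2*z + 2*alpha^2) ((1 - 4*alpha^2) * 1)).
    + apply is_lim_const.
    + apply (is_lim_scal_l _ (1 - 4*alpha^2) p_infty 1). exact Hg.
    + simpl. reflexivity.
  - apply continuous_ln. exact HL.
Qed.
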